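(* Let $M$ be a matroid on $E=\{0,\dots,n\}$ with dual matroid $M^\perp$. Then $\operatorname{crem}[\mathcal S_M]=[\mathcal Q_{M^\perp}^\vee]$ and $\operatorname{crem}[\mathcal Q_M]=[\mathcal S_{M^\perp}^\vee]$ in $K_T^0(X_E)$. In particular $\operatorname{crem}\, c(\mathcal S_M,u)=c(\mathcal Q_{M^\perp}^\vee,u)$ and $\operatorname{crem}\, c(\mathcal Q_M,u)=c(\mathcal S_{M^\perp}^\vee,u)$.
   Context: $X_E$ is the permutohedral variety (toric variety of the fan $\Sigma_E$ in $\mathbb R^E/\mathbb R\mathbf 1$ with cones $\operatorname{Cone}(\overline{\mathbf e}_{S_1},\dots,\overline{\mathbf e}_{S_k})$ for chains of nonempty proper subsets), with $T=(\mathbb C^* )^E$-fixed points $p_\sigma$ indexed by permutations $\sigma$ ($p_\sigma$ corresponds to the chain $S_i=\{\sigma(0),\dots,\sigma(i-1)\}$); $K_T^0(X_E)$ embeds in $\prod_\sigma\mathbb Z[T_0^{\pm1},\dots,T_n^{\pm1}]$ by restriction $[\mathcal E]\mapsto([\mathcal E]_\sigma)$. $B_\sigma(M)$ is the lexicographically first basis for the order $\sigma(0)\prec\cdots\prec\sigma(n)$; $[\mathcal S_M]_\sigma=\sum_{i\in B_\sigma(M)}T_i^{-1}$, $[\mathcal Q_M]_\sigma=\sum_{i\notin B_\sigma(M)}T_i^{-1}$; $\vee$ is the dual ($T_i\mapsto T_i^{-1}$), $c(\cdot,u)$ the non-equivariant Chern polynomial. The Cremona involution $\operatorname{crem}:X_E\to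 X_E$ is the toric morphism induced by $x\mapsto -x$ on $\Sigma_E$ (with $t\mapsto t^{-1}$ on tori); it acts on $K_T^0(X_E)$ by $(\operatorname{crem}[\mathcal E])_\sigma=[\mathcal E]_{\overline\sigma}(T_0^{-1},\dots,T_n^{-1})$ where $\overline\sigma(i)=\sigma(n-i)$, and on Chow rings by pullback ($=$ pushforward). *)

(* Defs.v *)
From HB Require Import structures.
From mathcomp Require Import all_boot all_order all_algebra all_fingroup.
From mathcomp Require Import freeg mpoly.

Set Implicit Arguments.
Unset Strict Implicit.
Unset Printing Implicit Defensive.

Import Order.TTheory GRing.Theory Num.Theory.
Local Open Scope ring_scope.

(* Ground set E = {0, ..., n}  is  'I_n.+1.                               *)

Definition is_matroid (T : finType) (bases : {set {set T}}) : Prop :=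
  bases != set0 /\
  forall B1 B2, B1 \in bases -> B2 \in bases ->
    forall x, x \in B1 :\: B2 ->
      exists2 y, y \in B2 :\: B1 & (y |: (B1 :\ x)) \in bases.

Definition dual_bases (T : finType) (bases : {set {set T}}) : {set {set T}} :=
  [set ~: B | B in bases].

(* B is the lexicographically first basis for the total order
   sigma(0) < sigma(1) < ... < sigma(n): for every other basis B',
   at the first position k (in the sigma-order) where B and B' differ,
   the element sigma(k) belongs to B. *)
Definition is_lexfirst n (bases : {set {set 'I_n.+1}}) (s : {perm 'I_n.+1})
    (B : {set 'I_n.+1}) : bool :=
  (B \in bases) &&
  [forall B' in bases, (B' != B) ==>
     [exists k : 'I_n.+1,
        [&& s k \in B, s k \notin B' &
            [forall j : 'I_n.+1, (j < k)%N ==> ((s j \in B) == (s j \in B'))]]]].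

(* B_sigma(M) (the empty set if M has no basis, which does not happen for a
   matroid). *)
Definition lexfirst n (bases : {set {set 'I_n.+1}}) (s : {perm 'I_n.+1})
    : {set 'I_n.+1} :=
  odflt set0 [pick B | is_lexfirst bases s B].

(* sigma-bar : i |-> sigma(n - i). Note (p * q) x = q (p x) for perms. *)
Definition rev_perm n : {perm 'I_n.+1} := perm (@rev_ord_inj n.+1).
Definition sbar n (s : {perm 'I_n.+1}) : {perm 'I_n.+1} := rev_perm n * s.

(* Characters of T = (C^* )^E : exponent vectors a, i.e. T^a = prod T_i^{a_i}. *)
(* Z[T_0^{+-1},...,T_n^{+-1}] as the free abelian group on characters.    *)

Definition char n := {ffun 'I_n.+1 -> int}.
Definition char_inv n (a : char n) : char n := [ffun i => - a i].
Definition Tinv n (i : 'I_n.+1) : char n := [ffun j => - ((j == i)%:R : int)].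

Definition laurent n := {freeg (char n) / int}.

Definition laurent_inv n (f : laurent n) : laurent n :=
  @fglift int (laurent n) (char n) (fun a : char n => (<< char_inv a >> : laurent n)) f.

(* Elements of prod_sigma Z[T^{+-1}] (containing K_T^0(X_E)). *)
Definition Kfam n := {perm 'I_n.+1} -> laurent n.

Definition cremK n (F : Kfam n) : Kfam n := fun s => laurent_inv (F (sbar s)).

(* T-equivariant (split) vector bundles through their fixed-point data:   *)
(* at each p_sigma the fibre is a T-representation = list of characters. *)

Definition tbundle n := {perm 'I_n.+1} -> seq (char n).

Definition Kclass n (V : tbundle n) : Kfam n :=
  fun s => \sum_(a <- V s) (<< a >> : laurent n).

Definition dualB n (V : tbundle n) : tbundle n :=
  fun s => [seq char_inv a | a <- V s].

Definition bundleS n (bases : {set {set 'I_n.+1}}) : tbundle n :=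
  fun s => [seq Tinv i | i <- enum (lexfirst bases s)].
Definition bundleQ n (bases : {set {set 'I_n.+1}}) : tbundle n :=
  fun s => [seq Tinv i | i <- enum (~: lexfirst bases s)].

(* Equivariant Chow ring A_T^*(X_E) inside prod_sigma Z[t_0,...,t_n], and *)
(* the equivariant Chern polynomial c^T(V,u) (polynomials in u).          *)

Definition Afam n := {perm 'I_n.+1} -> {poly {mpoly int[n.+1]}}.

Definition c1 n (a : char n) : {mpoly int[n.+1]} :=
  \sum_(i < n.+1) (a i)%:MP * 'X_i.

Definition chernT n (V : tbundle n) : Afam n :=
  fun s => \prod_(a <- V s) (1 + (c1 a)%:P * 'X).

Definition neg_vars n (p : {mpoly int[n.+1]}) : {mpoly int[n.+1]} :=
  p \mPo [tuple - 'X_i | i < n.+1].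

Definition cremA n (f : Afam n) : Afam n :=
  fun s => map_poly (@neg_vars n) (f (sbar s)).

(* Main.v *)
Require Import Defs.
From Stdlib Require Import FunctionalExtensionality.
From HB Require Import structures.
From mathcomp Require Import all_boot all_order all_algebra all_fingroup.
From mathcomp Require Import freeg mpoly.
From mathcomp Require Import zify.
Set Implicit Arguments.
Unset Strict Implicit.
Unset Printing Implicit Defensive.

Fixpoint code (f : nat -> bool) (m : nat) : nat :=
  if m is m'.+1 then (code f m').*2 + f m' else 0.

Lemma code_eq (f g : nat -> bool) m : (forall j, j < m -> f j = g j) -> code f m = code g m.
Proof.
elim: m => [//|m IH] H /=; rewrite IH ?H // => j Hj; apply: H; exact: ltnW.
Qed.

Lemma code_lt (f g : nat -> bool) k m : k < m -> (forall j, j < k -> f j = g j) ->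
  f k -> ~~ g k -> code g m < code f m.
Proof.
move=> km H fk gk; elim: m km => [//|m IH] km /=.
case: (ltngtP k m) => [lt|gt|eq].
- have := IH lt; rewrite -!addnn; case: (f m); case: (g m) => /= h; lia.
- by move: km; rewrite ltnS leqNgt gt.
- subst k; rewrite (negbTE gk) fk (code_eq H) -!addnn; lia.
Qed.

Section Lex.
Variable n : nat.
Implicit Types (s : {perm 'I_n.+1}) (B : {set 'I_n.+1}) (bases : {set {set 'I_n.+1}}).

Lemma first_diff s B B' : B != B' ->
  exists k : 'I_n.+1, ((s k \in B) != (s k \in B')) /\
    forall j : 'I_n.+1, (j < k)%N -> (s j \in B) = (s j \in B').
Proof.
move=> neq.
have [x Hx] : exists x, (x \in B) != (x \in B').
  apply/existsP; apply: contraR neq => /existsPn H; apply/eqP/setP => x.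
  by move: (H x); rewrite negbK => /eqP.
have ex : exists j, (j < n.+1) && ((s (inord j) \in B) != (s (inord j) \in B')).
  exists (s^-1 x)%g; rewrite ltn_ord /= inord_val permKV; exact: Hx.
case: (ex_minnP ex) => k /andP[kn Hk] kmin.
have E : inord k = Ordinal kn by apply: val_inj; rewrite /= inordK.
exists (Ordinal kn); split; first by rewrite -E.
move=> j jk; apply/eqP; apply: contraTT jk => hj; rewrite -leqNgt; apply: kmin.
by rewrite ltn_ord /= inord_val.
Qed.

Definition F s B := code (fun j => (j < n.+1) && (s (inord j) \in B)) n.+1.

Lemma F_lt s B B' (k : 'I_n.+1) : s k \in B' -> s k \notin B ->
  (forall j : 'I_n.+1, (j < k)%N -> (s j \in B) = (s j \in B')) -> (F s B < F s B')%N.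
Proof.
move=> h1 h2 h3; apply: (@code_lt _ _ k) => //.
- move=> j jk; have jn : (j < n.+1)%N by apply: ltn_trans (ltn_ord k).
  rewrite jn /=; have E : inord j = Ordinal jn by apply: val_inj; rewrite /= inordK.
  by rewrite E h3.
- by rewrite ltn_ord inord_val.
- by rewrite ltn_ord inord_val.
Qed.

Lemma lexfirst_exists bases s : bases != set0 -> exists B, is_lexfirst bases s B.
Proof.
case/set0Pn => B0 HB0.
case: (@arg_maxnP _ B0 (mem bases) (F s) HB0) => B HB Hmax.
exists B; apply/andP; split => //; apply/forall_inP => B' HB'; apply/implyP => neq.
have neq' : B != B' by rewrite eq_sym.
have [k [Hk Hpre]] := first_diff s neq'.
case Hb: (s k \in B) Hk => /= Hk.
  have Hk' : s k \notin B' by move: Hk; case: (s k \in B').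
  apply/existsP; exists k; rewrite Hb Hk' /=.
  by apply/forallP => j; apply/implyP => jk; rewrite Hpre.
have Hk' : s k \in B' by move: Hk; case: (s k \in B').
by have := Hmax B' HB'; rewrite /geq /= leqNgt (@F_lt _ _ _ k) // Hb.
Qed.

Lemma lexfirst_uniq bases s B1 B2 :
  is_lexfirst bases s B1 -> is_lexfirst bases s B2 -> B1 = B2.
Proof.
case/andP => H1 /forall_inP L1; case/andP => H2 /forall_inP L2.
apply/eqP; apply/negPn/negP => neq.
have neq' : B2 != B1 by rewrite eq_sym.
have /implyP/(_ neq')/existsP[k /and3P[a1 a2 /forallP a3]] := L1 B2 H2.
have /implyP/(_ neq)/existsP[k' /and3P[b1 b2 /forallP b3]] := L2 B1 H1.
case: (ltngtP k k') => [lt|gt|eq].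
- by move: (b3 k); rewrite lt /= (negbTE a2) a1.
- by move: (a3 k'); rewrite gt /= (negbTE b2) b1.
- have E : k = k' by apply: val_inj.
  by move: a1; rewrite E (negbTE b2).
Qed.

Lemma lexfirst_eq bases s B : is_lexfirst bases s B -> lexfirst bases s = B.
Proof.
move=> HB; rewrite /lexfirst; case: pickP => [B' HB' | H] /=.
  exact: lexfirst_uniq HB' HB.
by move: (H B); rewrite HB.
Qed.

Lemma sbarE s (m : 'I_n.+1) : sbar s m = s (rev_ord m).
Proof. by rewrite /sbar permM /rev_perm permE. Qed.

Lemma lexfirst_dual bases s : is_matroid bases ->
  lexfirst (dual_bases bases) s = ~: lexfirst bases (sbar s).
Proof.
case=> ne exch.
have [B HB] := lexfirst_exists (sbar s) ne.
rewrite (lexfirst_eq HB); apply: lexfirst_eq.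
case/andP: HB => HBin /forall_inP HL.
apply/andP; split; first by apply/imsetP; exists B.
apply/forall_inP => C /imsetP[B' HB' ->]; apply/implyP => neqC.
have neq : B != B' by apply: contraNneq neqC => ->.
have [k [Hk Hpre]] := first_diff s neq.
case Hb: (s k \in B) Hk => Hk; last first.
  have Hk' : s k \in B' by move: Hk; case: (s k \in B').
  apply/existsP; exists k; rewrite !inE Hb Hk' /=.
  by apply/forallP => j; apply/implyP => jk; rewrite !inE Hpre.
have Hk' : s k \notin B' by move: Hk; case: (s k \in B').
have skD : s k \in B :\: B' by rewrite inE Hb Hk'.
have [y /setDP[yB' yB] HB''] := exch B B' HBin HB' (s k) skD.
set B'' := y |: (B :\ s k) in HB''.
have neq'' : B'' != B.
  by apply: contraNneq yB => <-; rewrite /B'' !inE eqxx.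
have /implyP/(_ neq'')/existsP[m /and3P[m1 m2 /forallP m3]] := HL B'' HB''.
rewrite sbarE in m1 m2.
have Em : s (rev_ord m) = s k.
  move: m2; rewrite /B'' !inE m1 andbT negb_or negbK => /andP[_ /eqP] //.
have Em' : rev_ord m = k := perm_inj Em.
pose p := (s^-1 y)%g.
have Ey : s p = y by rewrite /p permKV.
have kp : (k < p)%N.
  case: (ltngtP k p) => // [gt|eq].
    by move: (Hpre p gt); rewrite Ey (negbTE yB) yB'.
  have E : k = p by apply: val_inj.
  by move: Hb; rewrite E Ey (negbTE yB).
have jm : (rev_ord p < m)%N.
  have Em2 : m = rev_ord k by rewrite -Em' rev_ordK.
  rewrite Em2 /= !subSS; have pn : (p <= n)%N by rewrite -ltnS; exact: ltn_ord.
  apply: ltn_sub2l => //; exact: leq_trans kp pn.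
move: (m3 (rev_ord p)); rewrite jm /= sbarE rev_ordK Ey (negbTE yB).
by rewrite /B'' !inE eqxx.
Qed.
End Lex.

Import GRing.Theory.
Local Open Scope ring_scope.

Lemma laurent_inv_sum n (r : seq (char n)) :
  laurent_inv (\sum_(a <- r) (<< a >> : laurent n)) = \sum_(a <- r) (<< char_inv a >> : laurent n).
Proof.
have addf := @lift_is_additive int (char n) (laurent n) (fun a : char n => (<< char_inv a >> : laurent n)).
have addf' : forall x y : laurent n, laurent_inv (x - y) = laurent_inv x - laurent_inv y.
  exact: addf.
have f0 : laurent_inv (0 : laurent n) = 0.
  by have := addf' 0 0; rewrite !subrr.
have fD : forall x y : laurent n, laurent_inv (x + y) = laurent_inv x + laurent_inv y.
  move=> x y; have := addf' x (- y); rewrite opprK => ->.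
  by have := addf' 0 y; rewrite sub0r f0 sub0r => ->; rewrite opprK.
elim: r => [|a r IH]; first by rewrite !big_nil.
by rewrite !big_cons fD IH /laurent_inv liftU scale1r.
Qed.

Lemma neg_vars_c1 n (a : char n) : neg_vars (c1 a) = c1 (char_inv a).
Proof.
rewrite /neg_vars /c1; elim/big_rec2: _ => [|i y1 y2 _ <-]; first exact: comp_mpoly0.
rewrite comp_mpolyD; congr (_ + _).
rewrite !mul_mpolyC comp_mpolyZ comp_mpolyXU -tnth_nth tnth_mktuple ffunE.
by rewrite scalerN scaleNr.
Qed.

Lemma chern_inv n (r : seq (char n)) :
  map_poly (@neg_vars n) (\prod_(a <- r) (1 + (c1 a)%:P * 'X)) =
  \prod_(a <- r) (1 + (c1 (char_inv a))%:P * 'X).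
Proof.
change (@neg_vars n) with (comp_mpoly [tuple - 'X_i | i < n.+1] : {mpoly int[n.+1]} -> {mpoly int[n.+1]}).
rewrite rmorph_prod; apply: eq_bigr => a _.
by rewrite rmorphD rmorph1 rmorphM /= map_polyC map_polyX /= -neg_vars_c1.
Qed.

Theorem proposition5p11 (n : nat) (bases : {set {set 'I_n.+1}}) :
  is_matroid bases ->
  [/\ cremK (Kclass (bundleS bases)) = Kclass (dualB (bundleQ (dual_bases bases))),
      cremK (Kclass (bundleQ bases)) = Kclass (dualB (bundleS (dual_bases bases))),
      cremA (chernT (bundleS bases)) = chernT (dualB (bundleQ (dual_bases bases)))
    & cremA (chernT (bundleQ bases)) = chernT (dualB (bundleS (dual_bases bases)))].
Proof.
move=> HM; split; apply: functional_extensionality => s;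
  rewrite /cremK /cremA /Kclass /chernT /dualB /bundleS /bundleQ lexfirst_dual // ?setCK.
- by rewrite laurent_inv_sum !big_map.
- by rewrite laurent_inv_sum !big_map.
- by rewrite chern_inv !big_map.
- by rewrite chern_inv !big_map.
Qed.
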